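(* Let $C\subseteq\mathbb{F}_q^n$ be a constant weight linear code. Then the map from the set of subcodes of $C$ to $2^{\{1,\dots,n\}}$ sending a subcode $C'$ to $\mathrm{Supp}(C')$ is injective.
   Context: A subcode is a linear subspace of $C$. For a subcode $D$, $\mathrm{Supp}(D)=\{x\in\{1,\dots,n\}: \exists d\in D,\ d_x\neq0\}$. A constant weight code is a linear code all of whose non-zero codewords have the same number of non-zero coordinates. *)

(* Defs.v *)
From HB Require Import structures.
From mathcomp Require Import all_boot all_order all_algebra all_field.
Set Implicit Arguments. Unset Strict Implicit. Unset Printing Implicit Defensive.
Import GRing.Theory.
Local Open Scope ring_scope.

Definition wt (F : finFieldType) (n : nat) (v : 'rV[F]_n) : nat :=
  #|[set i : 'I_n | v 0 i != 0]|.

Definition constant_weight (F : finFieldType) (n : nat) (C : {vspace 'rV[F]_n}) : Prop :=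
  exists w : nat, forall c : 'rV[F]_n, c \in C -> c != 0 -> wt c = w.

Definition supp (F : finFieldType) (n : nat) (D : {vspace 'rV[F]_n}) : {set 'I_n} :=
  [set x : 'I_n | [exists d : 'rV[F]_n, (d \in D) && (d 0 x != 0)]].

(* Main.v *)
Require Import Defs.
From HB Require Import structures.
From mathcomp Require Import all_boot all_order all_algebra all_field.
Local Open Scope ring_scope.
Import GRing.Theory.

Lemma wtE (F : finFieldType) (n : nat) (v : 'rV[F]_n) :
  wt v = (\sum_(i : 'I_n) (v ord0 i != 0%R))%N.
Proof.
rewrite /wt -sum1_card big_mkcond /=; apply: eq_bigr => i _.
by rewrite inE; case: (v 0 i != 0).
Qed.

Lemma wt_eq0 (F : finFieldType) (n : nat) (v : 'rV[F]_n) : wt v = 0%N -> v = 0.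
Proof.
rewrite /wt => /eqP; rewrite cards_eq0 => /eqP H.
apply/rowP => j; rewrite !mxE.
apply/eqP; apply: contraT => Hj.
have : j \in [set i : 'I_n | v 0 i != 0] by rewrite inE.
by rewrite H inE.
Qed.

Lemma key (F : finFieldType) (n : nat) (C D : {vspace 'rV[F]_n}) (w : nat)
  (hw : forall c : 'rV[F]_n, c \in C -> c != 0 -> wt c = w)
  (v : 'rV[F]_n) : (D <= C)%VS -> v \in C -> v \notin D ->
  (forall x, v 0 x != 0 -> x \in supp D) -> False.
Proof.
move=> sDC vC vD hsupp.
have v0 : v != 0 by apply: contraNneq vD => ->; rewrite mem0v.
have E : (\sum_(d : 'rV[F]_n | d \in D) wt (v + d)%R)%N =
         (\sum_(d : 'rV[F]_n | d \in D) wt d)%N.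
  under eq_bigr do rewrite wtE.
  under [in RHS]eq_bigr do rewrite wtE.
  rewrite exchange_big [in RHS]exchange_big /=.
  apply: eq_bigr => x _.
  have [vx0|vx] := eqVneq (v 0 x) 0.
    by apply: eq_bigr => d _; rewrite mxE vx0 add0r.
  have := hsupp x vx; rewrite inE => /existsP [d0 /andP [d0D d0x]].
  set a := v 0 x.
  set e := (d0 0 x)^-1 *: d0.
  have eD : a *: e \in D by rewrite memvZ // memvZ.
  rewrite (reindex_inj (addIr (- (a *: e)))) /=.
  apply: eq_big => g.
    by rewrite rpredBr.

  move=> _; rewrite !mxE /e.
  have -> : d0 ord0 x = d0 0 x by [].
  have -> : v ord0 x = a by [].
  by rewrite mulVf // mulr1 addrC subrK.
have Hs : forall d, d \in D -> d != 0 -> wt d = w.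
  by move=> d dD dn0; apply: hw => //; apply: (subvP sDC).
rewrite (bigD1 0) ?mem0v //= [in RHS](bigD1 0) ?mem0v //= addr0 in E.
have W0 : wt (0 : 'rV[F]_n) = 0%N.
  by rewrite wtE big1 // => i _; rewrite mxE eqxx.
rewrite W0 in E.
move: E.
rewrite (eq_bigr (fun _ => w)); last first.
  move=> d /andP [dD dn0]; apply: hw.
    by rewrite memvD // (subvP sDC).
  by apply: contraNneq vD => /eqP; rewrite addr_eq0 => /eqP ->; rewrite memvN.
rewrite [in RHS](eq_bigr (fun _ => w)); last by move=> d /andP [dD dn0]; apply: Hs.
move=> /eqP; rewrite eqn_add2r => /eqP w0.
have v00 := @wt_eq0 _ _ v w0.
by move: v0; rewrite v00 eqxx.
Qed.

Theorem proposition2 (F : finFieldType) (n : nat) (C : {vspace 'rV[F]_n}) :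
  constant_weight C ->
  forall D1 D2 : {vspace 'rV[F]_n},
    (D1 <= C)%VS -> (D2 <= C)%VS -> supp D1 = supp D2 -> D1 = D2.
Proof.
move=> [w hw] D1 D2 s1 s2 hs.
have sub : forall A B : {vspace 'rV[F]_n}, (A <= C)%VS -> (B <= C)%VS ->
    supp A = supp B -> (B <= A)%VS.
  move=> A B sA sB hAB; apply/subvP => v vB.
  apply: contraT => vA; exfalso.
  apply: (@key _ _ C A w hw v sA (subvP sB _ vB) vA) => x vx.
  rewrite hAB inE; apply/existsP; exists v; apply/andP; split; [exact: vB | exact: vx].
apply/eqP; rewrite eqEsubv; apply/andP; split.
  exact: (sub D2 D1 s2 s1 (esym hs)).
exact: (sub D1 D2 s1 s2 hs).
Qed.
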